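(* Let $G$ be an abstract $k$-molecule and let $A_k,B_k\subseteq V_G$ be such that both $(G,A_k)$ and $(G,B_k)$ are $k$-premolecules. Then (i) the subgraphs of $G$ induced by $A_k\setminus B_k$, by $B_k\setminus A_k$ and by $V_G\setminus(A_k\cup B_k)$ are all discrete (edgeless), and (ii) the subgraphs of $G$ induced by $A_k$ and by $B_k$ are isomorphic.
   Context: Graphs are finite and undirected; the connectivity of a graph is the largest $k$ such that one must remove at least $k$ vertices to disconnect it (by convention $K_m$, $m\ge3$, has connectivity $m-1$). $k$-molecule: for $k,h\ge1$, $B=\{b_1,\dots,b_k\}$ and a set $\mathcal B$ of edges among vertices of $B$, $\vartheta_{B}^{\mathcal B,h}$ is the graph with vertex set $B\cup\{v_1,\dots,v_h\}$ and edge set $\mathcal B\cup\{v_ib_j:1\le i\le h,1\le j\le k\}$, where $h\ge k-k'$, $k'$ being the connectivity of the subgraph induced by $B$. For a graph $G$ and $A\subseteq V_G$ with $|A|=k$, $(G,A)$ is a $k$-premolecule if there is a $k$-molecule $\vartheta_{B}^{\mathcal B,h}$ and an isomorphism $G\to\vartheta_{B}^{\mathcal B,h}$ mapping $A$ onto $B$; $G$ is an abstract $k$-molecule if such an $A$ exists. *)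

(* Defs.v *)
From mathcomp Require Import all_boot.
Set Implicit Arguments. Unset Strict Implicit. Unset Printing Implicit Defensive.

(* A finite simple graph: vertex type T : finType, adjacency e : rel T,
   assumed symmetric and irreflexive where used. *)

Definition restr_rel (T : finType) (e : rel T) (W : {set T}) : rel T :=
  [rel x y | [&& e x y, x \in W & y \in W]].

Definition disconnected_on (T : finType) (e : rel T) (W : {set T}) : bool :=
  [exists x in W, exists y in W, ~~ connect (restr_rel e W) x y].

(* connectivity of the subgraph induced by W: the least number of vertices
   whose removal disconnects it or leaves at most one vertex
   (so K_m has connectivity m-1). *)
Definition kappa (T : finType) (e : rel T) (W : {set T}) : nat :=
  \big[minn/#|W|]_(S : {set T} | (S \subset W) &&
        ((#|W :\: S| <= 1) || disconnected_on e (W :\: S))) #|S|.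

(* the k-molecule theta_B^{calB,h} with B = 'I_k (inl) and v_1..v_h = 'I_h (inr) *)
Definition mol_rel (k h : nat) (be : rel 'I_k) : rel ('I_k + 'I_h)%type :=
  fun u v => match u, v with
             | inl a, inl b => be a b
             | inl _, inr _ => true
             | inr _, inl _ => true
             | inr _, inr _ => false
             end.

Definition is_inl (X Y : Type) (u : X + Y) : bool :=
  if u is inl _ then true else false.

Definition premolecule (T : finType) (e : rel T) (k : nat) (A : {set T}) : Prop :=
  #|A| = k /\
  exists (h : nat) (be : rel 'I_k),
    [/\ 1 <= k /\ 1 <= h, symmetric be, irreflexive be,
        k - kappa be [set: 'I_k] <= h &
        exists phi : T -> ('I_k + 'I_h)%type,
          [/\ bijective phi,
              (forall x y, e x y = mol_rel be (phi x) (phi y)) &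
              (forall x, (x \in A) = is_inl (phi x))]].

Definition abstract_molecule (T : finType) (e : rel T) (k : nat) : Prop :=
  exists A : {set T}, premolecule e k A.

Definition edgeless_on (T : finType) (e : rel T) (S : {set T}) : Prop :=
  forall x y, x \in S -> y \in S -> ~~ e x y.

Definition induced_iso (T : finType) (e : rel T) (A B : {set T}) : Prop :=
  exists f : T -> T,
    [/\ {in A &, injective f}, f @: A = B &
        {in A &, forall x y, e (f x) (f y) = e x y}].

(* Main.v *)
Require Import Defs.
From mathcomp Require Import all_boot.

Lemma premol_out (T : finType) (e : rel T) (k : nat) (A : {set T}) :
  premolecule e k A -> forall u v, u \notin A -> e u v = (v \in A).
Proof.
move=> [_ [h [be [_ _ _ _ [phi [_ He HA]]]]]] u v.
rewrite He !HA /mol_rel.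
by case: (phi u) => // _ _; case: (phi v).
Qed.

Theorem mainTheorem9 (T : finType) (e : rel T) (k : nat)
  (e_sym : symmetric e) (e_irr : irreflexive e)
  (Gmol : abstract_molecule e k) (Ak Bk : {set T}) :
  premolecule e k Ak -> premolecule e k Bk ->
  (edgeless_on e (Ak :\: Bk) /\ edgeless_on e (Bk :\: Ak) /\
   edgeless_on e (~: (Ak :|: Bk))) /\
  induced_iso e Ak Bk.
Proof.
move=> PA PB.
have LA := @premol_out _ _ _ _ PA; have LB := @premol_out _ _ _ _ PB.
split.
  split; [|split] => x y.
  - by rewrite !inE => /andP[xB _] /andP[yB _]; rewrite LB // yB.
  - by rewrite !inE => /andP[xA _] /andP[yA _]; rewrite LA // yA.
  - by rewrite !inE !negb_or => /andP[xA _] /andP[yA _]; rewrite LA // (negbTE yA).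
have cA : #|Ak| = k by case: PA.
have cB : #|Bk| = k by case: PB.
set X := Ak :\: Bk; set Y := Bk :\: Ak.
have szXY : size (enum X) = size (enum Y).
  by rewrite -!cardE !cardsD cA cB setIC.
pose f x := if x \in X then nth x (enum Y) (index x (enum X)) else x.
have fX : forall x, x \in X -> f x \in Y.
  move=> x xX; rewrite /f xX -mem_enum; apply: mem_nth.
  by rewrite -szXY index_mem mem_enum.
have fA : forall y, y \in Ak -> (f y \in Ak) = (y \in Bk).
  move=> y yA; case yX: (y \in X).
    have := fX _ yX; rewrite !inE => /andP[/negbTE -> _].
    by move: yX; rewrite !inE yA andbT => /negbTE.
  rewrite /f yX yA; move: yX; rewrite !inE yA andbT.
  by case: (y \in Bk).
have injf : {in Ak &, injective f}.
  move=> x y xA yA.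
  case xX: (x \in X); case yX: (y \in X).
  - rewrite /f xX yX (set_nth_default y x); last by rewrite -szXY index_mem mem_enum.
    move=> /eqP; rewrite nth_uniq ?enum_uniq -?szXY ?index_mem ?mem_enum // => /eqP Hi.
    by rewrite -(nth_index x (_ : x \in enum X)) ?mem_enum // Hi nth_index ?mem_enum.
  - move=> Hf; have := fA x xA; have := fA y yA.
    rewrite Hf => ->; move: xX yX; rewrite !inE xA yA !andbT.
    by case: (x \in Bk); case: (y \in Bk).
  - move=> Hf; have := fA x xA; have := fA y yA.
    rewrite Hf => ->; move: xX yX; rewrite !inE xA yA !andbT.
    by case: (x \in Bk); case: (y \in Bk).
  - by rewrite /f xX yX.
exists f; split => //.
  apply/eqP; rewrite eqEcard card_in_imset // cA cB leqnn andbT.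
  apply/subsetP => _ /imsetP[x xA ->].
  case xX: (x \in X).
    by have := fX _ xX; rewrite inE => /andP[_].
  by move: (fA x xA); rewrite /f xX => <-.
move=> x y xA yA.
case xB: (x \in Bk).
  case yB: (y \in Bk).
    have fx : f x = x by rewrite /f !inE xB.
    have fy : f y = y by rewrite /f !inE yB.
    by rewrite fx fy.
  have fyA : f y \notin Ak by rewrite fA // yB.
  rewrite e_sym [e x y]e_sym (LB y x) ?yB // (LA (f y) (f x)) //.
  by rewrite fA.
have fxA : f x \notin Ak by rewrite fA // xB.
rewrite (LB x y) ?xB // (LA (f x) (f y)) //.
by rewrite fA.
Qed.
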